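(* Let $r>0$, $\delta>0$, $R:=r/\delta$, and suppose $R+\tfrac12\in\mathbb{Z}$. Then $$\int_{-\pi}^{\pi}\Delta_\delta(r\cos\theta)\cos\theta\,d\theta\ \ge\ \frac{16\sqrt2}{3\pi^2}\,\frac{\delta^{3/2}}{\sqrt r}.$$
   Context: For $\delta>0$, $Q_\delta(t):=\delta\lfloor t/\delta+1/2\rfloor$ and $\Delta_\delta(t):=t-Q_\delta(t)$. *)

(* Defs.v *)
From Stdlib Require Export Reals.
Open Scope R_scope.

(* floor on R: Int_part x = up x - 1 is the integer n with n <= x < n+1 *)
Definition Rfloor (x : R) : Z := Int_part x.

Definition Qd (delta t : R) : R := delta * IZR (Rfloor (t / delta + 1 / 2)).

Definition Dd (delta t : R) : R := t - Qd delta t.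

Definition integrand (delta r : R) (theta : R) : R :=
  Dd delta (r * cos theta) * cos theta.

(* Main.v *)
Require Import Defs.
From Stdlib Require Import Reals Lra Lia RList ZArith.
Open Scope R_scope.

Definition HasInt (f : R -> R) (a b v : R) : Prop :=
  exists pr : Riemann_integrable f a b, RiemannInt pr = v.

Lemma open_stepfun (f g : R -> R) a b : a <= b ->
  (forall x, a < x < b -> f x = g x) -> IsStepFun (fun x => f x - g x) a b.
Proof.
  intros Hab Heq. exists (cons a (cons b nil)). exists (cons 0 nil).
  unfold adapted_couple; repeat split.
  - unfold ordered_Rlist; intros i Hi; simpl in Hi.
    destruct i; [simpl; lra | lia].
  - simpl; unfold Rmin; destruct (Rle_dec a b); lra.
  - simpl; unfold Rmax; destruct (Rle_dec a b); lra.
  - unfold constant_D_eq, open_interval; intros i Hi x Hx; simpl in Hi.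
    destruct i; [ | lia]. simpl in *. rewrite Heq by lra. ring.
Qed.

Lemma integrable_open (f g : R -> R) a b : a <= b ->
  (forall x, a < x < b -> f x = g x) -> Riemann_integrable g a b ->
  Riemann_integrable f a b.
Proof.
  intros Hab Heq Hg eps. destruct (Hg eps) as [phi [psi [H1 H2]]].
  exists (mkStepFun (StepFun_P28 1 phi (mkStepFun (open_stepfun f g a b Hab Heq)))).
  exists psi. split; auto. intros t Ht. simpl.
  replace (f t - (phi t + 1 * (f t - g t))) with (g t - phi t) by ring. auto.
Qed.

Lemma HI_open f g a b v : a <= b -> (forall x, a < x < b -> f x = g x) ->
  HasInt g a b v -> HasInt f a b v.
Proof.
  intros Hab Heq [pr Hpr].
  exists (integrable_open f g a b Hab Heq pr). rewrite <- Hpr.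
  apply RiemannInt_P18; auto.
Qed.

Lemma HI_glue f a b c u v : HasInt f a b u -> HasInt f b c v -> HasInt f a c (u + v).
Proof.
  intros [p1 H1] [p2 H2]. exists (RiemannInt_P24 p1 p2).
  rewrite <- H1, <- H2. symmetry. apply RiemannInt_P26.
Qed.

Lemma HI_lin f g a b u v l : a <= b -> HasInt f a b u -> HasInt g a b v ->
  HasInt (fun x => f x + l * g x) a b (u + l * v).
Proof.
  intros Hab [p1 H1] [p2 H2]. exists (RiemannInt_P10 l p1 p2).
  rewrite <- H1, <- H2. apply RiemannInt_P12; auto.
Qed.

Lemma HI_FTC f F a b : a <= b -> (forall x, a <= x <= b -> continuity_pt f x) ->
  (forall x, a <= x <= b -> derivable_pt_lim F x (f x)) -> HasInt f a b (F b - F a).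
Proof.
  intros H H0 Hd. exists (continuity_implies_RiemannInt H H0).
  rewrite (RiemannInt_P20 H (FTC_P1 H H0) (continuity_implies_RiemannInt H H0)).
  assert (H1 := RiemannInt_P29 H H0).
  assert (H2 : antiderivative f F a b).
  { split; auto. intros x Hx. exists (exist _ (f x) (Hd x Hx)). reflexivity. }
  destruct (antiderivative_Ucte f _ _ _ _ H1 H2) as [C H3].
  rewrite !H3; [ring | lra | lra].
Qed.
Arguments HI_glue {f a b c u v}.

Definition G (a x : R) : R :=
  (if Rle_dec a (cos x) then 1 else 0) - (if Rlt_dec (cos x) (-a) then 1 else 0).

Lemma cos_piece_int c p q : p <= q -> HasInt (fun x => c * cos x) p q (c * sin q - c * sin p).
Proof.
  intros Hpq. apply (HI_FTC (fun x => c * cos x) (fun x => c * sin x)); auto.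
  - intros x _. apply derivable_continuous_pt.
    exists (c * - sin x). apply (derivable_pt_lim_scal cos c x). apply derivable_pt_lim_cos.
  - intros x _. apply (derivable_pt_lim_scal sin c x). apply derivable_pt_lim_sin.
Qed.

Lemma HI_eqv f a b u v : HasInt f a b u -> u = v -> HasInt f a b v.
Proof. intros H ->; auto. Qed.

Lemma cos_PI_minus x : cos (PI - x) = - cos x.
Proof. rewrite cos_minus, cos_PI, sin_PI. ring. Qed.

Lemma acos_facts a : 0 < a <= 1 -> cos (acos a) = a /\ 0 <= acos a < PI / 2.
Proof.
  intros Ha. assert (Hc : cos (acos a) = a) by (apply cos_acos; lra).
  split; auto. destruct (acos_bound a) as [H1 H2]. split; auto.
  destruct (Rlt_le_dec (acos a) (PI/2)) as [h|h]; auto.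
  destruct h as [h|h].
  - destruct (Rle_lt_or_eq_dec _ _ H2) as [h2|h2].
    + assert (cos (acos a) < 0) by (apply cos_lt_0; lra). lra.
    + rewrite h2, cos_PI in Hc. lra.
  - rewrite <- h, cos_PI2 in Hc. lra.
Qed.

Lemma cos_cmp a y : 0 < a <= 1 -> 0 <= y <= PI ->
  (y < acos a -> a < cos y) /\ (acos a < y -> cos y < a) /\
  (y < PI - acos a -> - a < cos y) /\ (PI - acos a < y -> cos y < - a).
Proof.
  intros Ha Hy. destruct (acos_facts a Ha) as [Hc Hb].
  assert (Hc2 : cos (PI - acos a) = - a) by (rewrite cos_PI_minus; lra).
  repeat split; intros h.
  - rewrite <- Hc at 1. apply cos_decreasing_1; lra.
  - rewrite <- Hc. apply cos_decreasing_1; lra.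
  - rewrite <- Hc2. apply cos_decreasing_1; lra.
  - rewrite <- Hc2. apply cos_decreasing_1; lra.
Qed.

Lemma Hcos a : 0 < a <= 1 -> HasInt (fun x => cos x * G a x) (-PI) PI (4 * sin (acos a)).
Proof.
  intros Ha. destruct (acos_facts a Ha) as [Hc Hb].
  set (al := acos a) in *.
  assert (HP := PI_RGT_0).
  assert (Hg : forall x, -PI <= x <= PI -> 
     (-PI < x < -PI + al -> cos x * G a x = -1 * cos x) /\
     (-PI + al < x < - al -> cos x * G a x = 0 * cos x) /\
     (- al < x < al -> cos x * G a x = 1 * cos x) /\
     (al < x < PI - al -> cos x * G a x = 0 * cos x) /\
     (PI - al < x < PI -> cos x * G a x = -1 * cos x)).
  { intros x Hx. unfold G.
    destruct (Rle_lt_dec 0 x) as [h0|h0].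
    - destruct (cos_cmp a x Ha ltac:(lra)) as [c1 [c2 [c3 c4]]]. fold al in c1, c2, c3, c4.
      repeat split; intros h;
      destruct (Rle_dec a (cos x)); destruct (Rlt_dec (cos x) (-a));
      try lra; try (specialize (c1 ltac:(lra))); try (specialize (c2 ltac:(lra)));
      try (specialize (c3 ltac:(lra))); try (specialize (c4 ltac:(lra))); lra.
    - destruct (cos_cmp a (-x) Ha ltac:(lra)) as [c1 [c2 [c3 c4]]]. fold al in c1, c2, c3, c4.
      rewrite cos_neg in c1, c2, c3, c4.
      repeat split; intros h;
      destruct (Rle_dec a (cos x)); destruct (Rlt_dec (cos x) (-a));
      try lra; try (specialize (c1 ltac:(lra))); try (specialize (c2 ltac:(lra)));
      try (specialize (c3 ltac:(lra))); try (specialize (c4 ltac:(lra))); lra. }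
  assert (P1 : HasInt (fun x => cos x * G a x) (-PI) (-PI+al) (-1 * sin (-PI+al) - -1 * sin (-PI))).
  { apply (HI_open _ (fun x => -1 * cos x)); [lra | | apply cos_piece_int; lra].
    intros x Hx. destruct (Hg x ltac:(lra)) as [g1 [g2 [g3 [g4 g5]]]]; apply g1; lra. }
  assert (P2 : HasInt (fun x => cos x * G a x) (-PI+al) (-al) (0 * sin (-al) - 0 * sin (-PI+al))).
  { apply (HI_open _ (fun x => 0 * cos x)); [lra | | apply cos_piece_int; lra].
    intros x Hx. destruct (Hg x ltac:(lra)) as [g1 [g2 [g3 [g4 g5]]]]; apply g2; lra. }
  assert (P3 : HasInt (fun x => cos x * G a x) (-al) al (1 * sin al - 1 * sin (-al))).
  { apply (HI_open _ (fun x => 1 * cos x)); [lra | | apply cos_piece_int; lra].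
    intros x Hx. destruct (Hg x ltac:(lra)) as [g1 [g2 [g3 [g4 g5]]]]; apply g3; lra. }
  assert (P4 : HasInt (fun x => cos x * G a x) al (PI-al) (0 * sin (PI-al) - 0 * sin al)).
  { apply (HI_open _ (fun x => 0 * cos x)); [lra | | apply cos_piece_int; lra].
    intros x Hx. destruct (Hg x ltac:(lra)) as [g1 [g2 [g3 [g4 g5]]]]; apply g4; lra. }
  assert (P5 : HasInt (fun x => cos x * G a x) (PI-al) PI (-1 * sin PI - -1 * sin (PI-al))).
  { apply (HI_open _ (fun x => -1 * cos x)); [lra | | apply cos_piece_int; lra].
    intros x Hx. destruct (Hg x ltac:(lra)) as [g1 [g2 [g3 [g4 g5]]]]; apply g5; lra. }
  eapply HI_eqv.
  - exact (HI_glue (HI_glue (HI_glue (HI_glue P1 P2) P3) P4) P5).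
  - replace (-PI + al) with (- (PI - al)) by ring.
    rewrite !sin_neg, !sin_PI_x, sin_PI. ring.
Qed.

Definition aj (Rr:R) (j:nat) : R := (INR j - 1/2)/Rr.
Fixpoint Gs (Rr:R) (n:nat) (x:R) : R :=
  match n with O => 0 | S n' => Gs Rr n' x + G (aj Rr (S n')) x end.
Fixpoint Ss (Rr:R) (n:nat) : R :=
  match n with O => 0 | S n' => Ss Rr n' + sin (acos (aj Rr (S n'))) end.

Lemma HGs Rr n : 0 < Rr -> INR n - 1/2 <= Rr ->
  HasInt (fun x => cos x * Gs Rr n x) (-PI) PI (4 * Ss Rr n).
Proof.
  intros HR. assert (HP := PI_RGT_0). induction n as [|n IH]; intros Hn.
  - eapply HI_eqv.
    + apply (HI_open _ (fun x => 0 * cos x)); [lra | | apply cos_piece_int; lra].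
      intros x _. simpl. ring.
    + simpl. ring.
  - rewrite S_INR in Hn. assert (H0 := pos_INR n).
    assert (Ha : 0 < aj Rr (S n) <= 1).
    { unfold aj. rewrite S_INR. split.
      - apply Rdiv_lt_0_compat; lra.
      - apply Rmult_le_reg_r with Rr; auto. field_simplify; lra. }
    eapply HI_eqv.
    + apply (HI_open _ (fun x => cos x * Gs Rr n x + 1 * (cos x * G (aj Rr (S n)) x))); [lra | |].
      * intros x _. simpl. ring.
      * apply HI_lin; [lra | apply IH; lra | apply Hcos; auto].
    + simpl. ring.
Qed.

Fixpoint cz (m:Z) (n:nat) : Z :=
  match n with O => 0%Z | S n' => (cz m n' + ((if Z_le_dec (Z.of_nat (S n')) m then 1 else 0)
      - (if Z_le_dec (Z.of_nat (S n')) (-m) then 1 else 0)))%Z end.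

Lemma cz_val m n : cz m n = (Z.max 0 (Z.min m (Z.of_nat n)) - Z.max 0 (Z.min (-m) (Z.of_nat n)))%Z.
Proof.
  induction n as [|n IH]; cbn [cz].
  - lia.
  - rewrite IH. destruct (Z_le_dec (Z.of_nat (S n)) m); destruct (Z_le_dec (Z.of_nat (S n)) (-m)); lia.
Qed.

Lemma G_int Rr j x : 0 < Rr -> (1 <= j)%nat ->
  let m := Int_part (Rr * cos x + 1/2) in
  G (aj Rr j) x = (if Z_le_dec (Z.of_nat j) m then 1 else 0) - (if Z_le_dec (Z.of_nat j) (-m) then 1 else 0).
Proof.
  intros HR Hj m. destruct (base_Int_part (Rr * cos x + 1/2)) as [b1 b2]. fold m in b1, b2.
  assert (HJ : INR j = IZR (Z.of_nat j)) by apply INR_IZR_INZ.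
  assert (E : aj Rr j * Rr = INR j - 1/2) by (unfold aj; field; lra).
  assert (E1 : aj Rr j <= cos x <-> INR j - 1/2 <= Rr * cos x).
  { split; intro h.
    - rewrite <- E. rewrite Rmult_comm. apply Rmult_le_compat_l; lra.
    - apply Rmult_le_reg_r with Rr; auto. lra. }
  assert (E2 : cos x < - aj Rr j <-> Rr * cos x < - (INR j - 1/2)).
  { split; intro h.
    - rewrite <- E. assert (Rr * cos x < Rr * (- aj Rr j)) by (apply Rmult_lt_compat_l; lra). lra.
    - apply Rmult_lt_reg_r with Rr; auto. lra. }
  unfold G.
  destruct (Z_le_dec (Z.of_nat j) m) as [z1|z1];
    [apply IZR_le in z1 | assert (z1' : (m + 1 <= Z.of_nat j)%Z) by lia; apply IZR_le in z1'; rewrite plus_IZR in z1'];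
  (destruct (Z_le_dec (Z.of_nat j) (-m)) as [z2|z2];
    [apply IZR_le in z2; rewrite opp_IZR in z2 | assert (z2' : (-m + 1 <= Z.of_nat j)%Z) by lia; apply IZR_le in z2'; rewrite plus_IZR, opp_IZR in z2']);
  destruct (Rle_dec (aj Rr j) (cos x)) as [r1|r1]; destruct (Rlt_dec (cos x) (- aj Rr j)) as [r2|r2];
  try rewrite E1 in r1; try rewrite E2 in r2; try rewrite E1 in *; try rewrite E2 in *; try lra.
Qed.

Lemma Gs_cz Rr n x : 0 < Rr -> Gs Rr n x = IZR (cz (Int_part (Rr * cos x + 1/2)) n).
Proof.
  intros HR. induction n as [|n IH]; [reflexivity|].
  cbn [Gs cz]. rewrite IH, (G_int Rr (S n) x HR ltac:(lia)).
  rewrite plus_IZR, minus_IZR.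
  destruct (Z_le_dec _ _); destruct (Z_le_dec _ _); simpl; ring.
Qed.

Lemma cos2_int r : HasInt (fun x => r * (cos x * cos x)) (-PI) PI (r * PI).
Proof.
  assert (HP := PI_RGT_0).
  eapply HI_eqv.
  - apply (HI_FTC _ (fun x => (r/2) * (x + sin x * cos x))); [lra | |].
    + intros x _. apply derivable_continuous_pt.
      exists (r * (- sin x * cos x + cos x * - sin x)).
      apply (derivable_pt_lim_scal (fun x => cos x * cos x) r x).
      apply (derivable_pt_lim_mult cos cos x); apply derivable_pt_lim_cos.
    + intros x _.
      replace (r * (cos x * cos x)) with ((r/2) * (1 + (cos x * cos x + sin x * - sin x))).
      * apply (derivable_pt_lim_scal (fun x => x + sin x * cos x) (r/2) x).
        apply (derivable_pt_lim_plus id (fun x => sin x * cos x) x).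
        -- apply derivable_pt_lim_id.
        -- apply (derivable_pt_lim_mult sin cos x); [apply derivable_pt_lim_sin | apply derivable_pt_lim_cos].
      * assert (Hs := sin2_cos2 x). unfold Rsqr in Hs. assert (Hr : r * (sin x * sin x + cos x * cos x) = r) by (rewrite Hs; ring). lra.
  - rewrite sin_PI, sin_neg, sin_PI. field.
Qed.

Lemma main_int r d K : 0 < r -> 0 < d -> r / d = INR K - 1/2 ->
  HasInt (integrand d r) (-PI) PI (r * PI + (-d) * (4 * Ss (r/d) K)).
Proof.
  intros Hr Hd HK. set (Rr := r / d) in *.
  assert (HR : 0 < Rr) by (unfold Rr; apply Rdiv_lt_0_compat; auto).
  apply (HI_open _ (fun x => r * (cos x * cos x) + (-d) * (cos x * Gs Rr K x))).
  - assert (HP := PI_RGT_0); lra.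
  - intros x _. unfold integrand, Dd, Qd, Rfloor.
    replace (r * cos x / d) with (Rr * cos x) by (unfold Rr; field; lra).
    rewrite (Gs_cz Rr K x HR), cz_val.
    set (m := Int_part (Rr * cos x + 1/2)).
    destruct (base_Int_part (Rr * cos x + 1/2)) as [b1 b2]. fold m in b1, b2.
    assert (Hc := COS_bound x).
    assert (Hcr : - Rr <= Rr * cos x <= Rr) by (split; nra).
    rewrite INR_IZR_INZ in HK.
    assert (m1 : (m <= Z.of_nat K)%Z) by (apply le_IZR; lra).
    assert (m2 : (- Z.of_nat K < m)%Z) by (apply lt_IZR; rewrite opp_IZR; lra).
    replace (Z.max 0 (Z.min m (Z.of_nat K)) - Z.max 0 (Z.min (- m) (Z.of_nat K)))%Z with m by lia.
    ring.
  - apply HI_lin; [assert (HP := PI_RGT_0); lra | apply cos2_int | apply HGs; auto; lra].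
Qed.

Lemma INR_fact_val n z : Z.of_nat (fact n) = z -> INR (fact n) = IZR z.
Proof. intros H. rewrite INR_IZR_INZ, H. reflexivity. Qed.

Lemma sin_ub_poly x : sin_ub x = x - x^3/6 + x^5/120 - x^7/5040 + x^9/362880.
Proof.
  unfold sin_ub, sin_approx. rewrite !tech5. cbn [sum_f_R0]. unfold sin_term.
  rewrite (INR_fact_val (2*0+1) 1) by (vm_compute; reflexivity).
  rewrite (INR_fact_val (2*1+1) 6) by (vm_compute; reflexivity).
  rewrite (INR_fact_val (2*2+1) 120) by (vm_compute; reflexivity).
  rewrite (INR_fact_val (2*3+1) 5040) by (vm_compute; reflexivity).
  rewrite (INR_fact_val (2*4+1) 362880) by (vm_compute; reflexivity).
  simpl. field.
Qed.

Definition al (Rr : R) (j : nat) := acos (aj Rr j).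
Definition Fd (Rr : R) (n : nat) :=
  2 * Rr * (PI/2 - al Rr (S n)) - 4 * Ss Rr n + 2 * (INR n - 1/2) * sin (al Rr (S n)).

Lemma x_sin x : 0 <= x -> 0 <= x - sin x.
Proof. intros [h|h]; [apply sin_lt_x in h; lra | subst; rewrite sin_0; lra]. Qed.

Lemma aj_range Rr j : 0 < Rr -> (1 <= j)%nat -> INR j - 1/2 <= Rr -> 0 < aj Rr j <= 1.
Proof.
  intros HR Hj Hle. apply le_INR in Hj. simpl in Hj. unfold aj. split.
  - apply Rdiv_lt_0_compat; lra.
  - apply Rmult_le_reg_r with Rr; auto. field_simplify; lra.
Qed.

Lemma Rr_aj Rr j : 0 < Rr -> Rr * aj Rr j = INR j - 1/2.
Proof. intros; unfold aj; field; lra. Qed.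

Lemma F0 Rr : 1/2 <= Rr -> 0 <= Fd Rr 0.
Proof.
  intros HR. assert (Ha := aj_range Rr 1 ltac:(lra) (le_n 1) ltac:(simpl; lra)).
  destruct (acos_facts _ Ha) as [Hc Hb].
  assert (E := Rr_aj Rr 1 ltac:(lra)). simpl in E.
  unfold Fd. unfold al. simpl INR. cbn [Ss].
  set (a1 := acos (aj Rr 1)) in *.
  assert (Ht : sin (PI/2 - a1) < PI/2 - a1) by (apply sin_lt_x; lra).
  rewrite sin_shift, Hc in Ht. assert (Hs := SIN_bound a1). nra.
Qed.

Lemma Fstep Rr n : 0 < Rr -> INR (S (S n)) - 1/2 <= Rr ->
  Fd Rr (S n) = Fd Rr n + 2 * Rr * ((al Rr (S n) - al Rr (S (S n))) - sin (al Rr (S n) - al Rr (S (S n)))).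
Proof.
  intros HR Hn. assert (H0 := pos_INR n).
  assert (Ha1 := aj_range Rr (S n) HR ltac:(lia) ltac:(rewrite !S_INR in *; lra)).
  assert (Ha2 := aj_range Rr (S (S n)) HR ltac:(lia) Hn).
  destruct (acos_facts _ Ha1) as [Hc1 _]. destruct (acos_facts _ Ha2) as [Hc2 _].
  unfold Fd, al. cbn [Ss]. rewrite sin_minus, Hc1, Hc2. unfold aj. rewrite !S_INR. field. lra.
Qed.

Lemma al_dec Rr n : 0 < Rr -> INR (S (S n)) - 1/2 <= Rr -> al Rr (S (S n)) <= al Rr (S n).
Proof.
  intros HR Hn. assert (H0 := pos_INR n).
  assert (Ha1 := aj_range Rr (S n) HR ltac:(lia) ltac:(rewrite !S_INR in *; lra)).
  assert (Ha2 := aj_range Rr (S (S n)) HR ltac:(lia) Hn).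
  destruct (acos_facts _ Ha1) as [Hc1 Hb1]. destruct (acos_facts _ Ha2) as [Hc2 Hb2].
  unfold al. destruct (Rle_lt_dec (acos (aj Rr (S (S n)))) (acos (aj Rr (S n)))) as [h|h]; auto.
  assert (cos (acos (aj Rr (S (S n)))) < cos (acos (aj Rr (S n)))) by (apply cos_decreasing_1; lra).
  rewrite Hc1, Hc2 in H. unfold aj in H. rewrite !S_INR in H.
  assert ((INR n + 1 + 1 - 1/2) / Rr - (INR n + 1 - 1/2)/Rr = 1 / Rr) by (field; lra).
  assert (0 < 1/Rr) by (apply Rdiv_lt_0_compat; lra). lra.
Qed.

Lemma F_nonneg Rr n : 1/2 <= Rr -> INR (S n) - 1/2 <= Rr -> 0 <= Fd Rr n.
Proof.
  intros HR. induction n as [|n IH]; intros Hn.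
  - apply F0; auto.
  - rewrite Fstep by lra. assert (Hd := al_dec Rr n ltac:(lra) Hn).
    assert (IH' : 0 <= Fd Rr n) by (apply IH; rewrite !S_INR in Hn; rewrite S_INR; lra).
    assert (0 <= (al Rr (S n) - al Rr (S (S n))) - sin (al Rr (S n) - al Rr (S (S n)))) by (apply x_sin; lra).
    nra.
Qed.

Lemma FK Rr n : Rr = INR (S n) - 1/2 -> Rr * PI - 4 * Ss Rr (S n) = Fd Rr n.
Proof.
  intros HK. assert (H0 := pos_INR n). rewrite S_INR in HK.
  assert (E : aj Rr (S n) = 1) by (unfold aj; rewrite S_INR; rewrite HK; field; lra).
  unfold Fd, al. cbn [Ss]. rewrite E, acos_1, sin_0. field.
Qed.

Lemma bound_d Rr d : 3/2 <= Rr -> 0 <= d < PI/2 -> cos d = 1 - 1/Rr ->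
  512/729 <= 4 * Rr^3 * (d - sin d)^2.
Proof.
  intros HR Hd Hc.
  assert (HP4 := PI_4).
  assert (Hs2 : 0 <= sin (d/2) <= d/2).
  { split; [apply sin_ge_0; lra|].
    destruct (Rle_lt_or_eq_dec 0 (d/2) ltac:(lra)) as [h|h];
      [apply Rlt_le, sin_lt_x; auto | rewrite <- h, sin_0; lra]. }
  assert (Hc2 := cos_2a_sin (d/2)). replace (2 * (d/2)) with d in Hc2 by field.
  assert (Hq : 2 <= Rr * (d*d)).
  { assert (1/Rr <= d*d/2) by nra.
    assert (Rr * (1/Rr) = 1) by (field; lra). nra. }
  assert (Hdp : 0 < d) by (destruct Hd as [[h|h] _]; auto; subst; nra).
  assert (Hsin : sin d <= d - d^3/6 + d^5/120 - d^7/5040 + d^9/362880).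
  { rewrite <- sin_ub_poly. apply SIN; lra. }
  set (X := d - sin d) in *.
  assert (HX : d^3/6 - d^5/120 + d^7/5040 - d^9/362880 <= X) by (unfold X; lra).
  assert (H7 : 0 <= d^7) by (apply pow_le; lra).
  set (y := d*d) in *.
  assert (Ey3 : d^3 = d * y) by (unfold y; ring).
  assert (Ey5 : d^5 = d * y * y) by (unfold y; ring).
  assert (Ey9 : d^9 = d * y * y * y * y) by (unfold y; ring).
  rewrite Ey3, Ey5, Ey9 in HX.
  assert (Hy0 : 0 < y) by (unfold y; nra).
  assert (Hy4 : y < 4) by (unfold y; nra).
  destruct (Rle_lt_dec y 2) as [hy|hy].
  - set (c1 := 1/6 - 2/120 - 8/362880).
    assert (HX1 : c1 * (d * y) <= X).
    { unfold c1. assert (d*y*y <= d*y*2) by (apply Rmult_le_compat_l; nra).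
      assert (d*y*y*y*y <= d*y*8).
      { assert (y*y*y <= 8) by (assert (y*y <= 4) by nra; nra). 
        replace (d*y*y*y*y) with ((d*y)*(y*y*y)) by ring. assert (0 <= d*y) by nra. nra. }
      lra. }
    assert (Hc1 : 0 < c1) by (unfold c1; lra).
    assert (HX2 : (c1 * (d*y))^2 <= X^2).
    { assert (0 <= c1 * (d*y)) by (apply Rmult_le_pos; nra). apply pow_incr; lra. }
    assert (E : 4 * Rr^3 * (c1*(d*y))^2 = 4 * c1^2 * (Rr*y)^3) by (unfold y; ring).
    assert (Hq3 : 8 <= (Rr*y)^3) by (replace 8 with (2^3) by ring; apply pow_incr; lra).
    assert (4 * Rr^3 * (c1*(d*y))^2 <= 4 * Rr^3 * X^2) by (apply Rmult_le_compat_l; [assert (0 <= Rr^3) by (apply pow_le; lra); lra | auto]).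
    assert (512/729 <= 4 * c1^2 * 8) by (unfold c1; lra).
    assert (4 * c1^2 * 8 <= 4 * c1^2 * (Rr*y)^3) by (apply Rmult_le_compat_l; [nra | auto]).
    lra.
  - set (c2 := 1/6 - 4/120 - 64/362880).
    assert (HX1 : c2 * (d * y) <= X).
    { unfold c2. assert (d*y*y <= d*y*4) by (apply Rmult_le_compat_l; nra).
      assert (d*y*y*y*y <= d*y*64).
      { assert (y*y*y <= 64) by (assert (y*y <= 16) by nra; nra). 
        replace (d*y*y*y*y) with ((d*y)*(y*y*y)) by ring. assert (0 <= d*y) by nra. nra. }
      lra. }
    assert (Hc2' : 0 < c2) by (unfold c2; lra).
    assert (HX2 : (c2 * (d*y))^2 <= X^2).
    { assert (0 <= c2 * (d*y)) by (apply Rmult_le_pos; nra). apply pow_incr; lra. }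
    assert (E : (c2*(d*y))^2 = c2^2 * y^3) by (unfold y; ring).
    assert (Hy3 : 8 <= y^3) by (replace 8 with (2^3) by ring; apply pow_incr; lra).
    assert (HR3 : 27/8 <= Rr^3) by (replace (27/8) with ((3/2)^3) by field; apply pow_incr; lra).
    assert (8 * c2^2 <= X^2) by nra.
    assert (512/729 <= 4 * (27/8) * (8 * c2^2)) by (unfold c2; lra).
    assert (4 * (27/8) * (8 * c2^2) <= 4 * Rr^3 * X^2).
    { assert (0 <= 8 * c2^2) by nra. nra. }
    lra.
Qed.

Lemma key_ineq Rr n : Rr = INR (S n) - 1/2 -> 512/729 <= (Fd Rr n)^2 * Rr /\ 0 <= Fd Rr n.
Proof.
  intros HK. assert (H0 := pos_INR n). rewrite S_INR in HK.
  destruct n as [|n].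
  - simpl in HK. assert (E : Fd Rr 0 = Rr * PI).
    { assert (Ea : aj Rr 1 = 1) by (unfold aj; rewrite HK; simpl; field).
      unfold Fd, al. cbn [Ss]. rewrite Ea.
      rewrite acos_1, sin_0. field. }
    rewrite E. assert (HP := PI2_3_2). split; [|nra].
    rewrite HK. replace (1 - 1/2) with (1/2) by field. nra.
  - rewrite S_INR in H0, HK. assert (H1 := pos_INR n).
    assert (HR : 3/2 <= Rr) by lra.
    rewrite Fstep by (try rewrite !S_INR; lra).
    assert (Fn := F_nonneg Rr n ltac:(lra) ltac:(rewrite S_INR; lra)).
    assert (E2 : al Rr (S (S n)) = 0).
    { unfold al. replace (aj Rr (S (S n))) with 1 by (unfold aj; rewrite !S_INR, HK; field; lra). apply acos_1. }
    rewrite E2, Rminus_0_r.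
    assert (Ha : 0 < aj Rr (S n) <= 1) by (apply aj_range; [lra | lia | rewrite S_INR; lra]).
    destruct (acos_facts _ Ha) as [Hc Hb].
    assert (Ea : aj Rr (S n) = 1 - 1/Rr) by (unfold aj; rewrite S_INR, HK; field; lra).
    unfold al. set (D := acos (aj Rr (S n))) in *.
    assert (HB := bound_d Rr D HR Hb ltac:(rewrite Hc; auto)).
    assert (HX := x_sin D ltac:(lra)).
    set (X := D - sin D) in *.
    assert (0 <= 2 * Rr * X) by nra.
    assert (HF : 2 * Rr * X <= Fd Rr n + 2 * Rr * X) by lra.
    split; [|lra].
    assert ((2*Rr*X)^2 <= (Fd Rr n + 2 * Rr * X)^2) by (apply pow_incr; lra).
    assert ((2*Rr*X)^2 * Rr = 4 * Rr^3 * X^2) by ring.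
    nra.
Qed.

Theorem lemma5p1 (r delta : R) (hr : 0 < r) (hdelta : 0 < delta)
  (hR : exists k : Z, r / delta + 1 / 2 = IZR k) :
  exists pr : Riemann_integrable (integrand delta r) (- PI) PI,
    RiemannInt pr >=
      (16 * sqrt 2 / (3 * PI ^ 2)) * (Rpower delta (3 / 2) / sqrt r).
Proof.
  destruct hR as [k hk].
  assert (HR : 0 < r / delta) by (apply Rdiv_lt_0_compat; auto).
  assert (Hk : (0 < k)%Z) by (apply lt_IZR; lra).
  assert (HKn : INR (Z.to_nat k) = IZR k) by (rewrite INR_IZR_INZ, Z2Nat.id; auto; lia).
  destruct (Z.to_nat k) as [|n] eqn:EK; [lia|].
  assert (HRr : r / delta = INR (S n) - 1/2) by lra.
  destruct (main_int r delta (S n) hr hdelta HRr) as [pr Hpr].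
  exists pr. rewrite Hpr.
  set (Rr := r / delta) in *.
  assert (Er : r = delta * Rr) by (unfold Rr; field; lra).
  assert (FKe := FK Rr n HRr).
  destruct (key_ineq Rr n HRr) as [Hk1 Hk2].
  assert (Hpow : Rpower delta (3/2) = delta * sqrt delta).
  { replace (3/2) with (1 + /2) by field. rewrite Rpower_plus, Rpower_1, Rpower_sqrt; auto. }
  rewrite Hpow. rewrite Er at 2. rewrite sqrt_mult by lra.
  assert (Hsd : 0 < sqrt delta) by (apply sqrt_lt_R0; auto).
  assert (Hsr : 0 < sqrt Rr) by (apply sqrt_lt_R0; auto).
  assert (Hss : sqrt Rr * sqrt Rr = Rr) by (apply sqrt_sqrt; lra).
  assert (Hs2 : sqrt 2 * sqrt 2 = 2) by (apply sqrt_sqrt; lra).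
  assert (Hs2p : 0 < sqrt 2) by (apply sqrt_lt_R0; lra).
  assert (HP := PI2_3_2).
  set (C := 16 * sqrt 2 / (3 * PI ^ 2)).
  assert (HC0 : 0 < C) by (unfold C; apply Rdiv_lt_0_compat; [lra | apply Rmult_lt_0_compat; [lra | apply pow_lt; lra]]).
  assert (HPn : PI <> 0) by lra.
  assert (HC2 : C * C <= 512/729).
  { unfold C. replace (16 * sqrt 2 / (3 * PI ^ 2) * (16 * sqrt 2 / (3 * PI ^ 2))) with (256 * (sqrt 2 * sqrt 2) / (9 * PI^4)) by (field; auto).
    rewrite Hs2. replace (256 * 2 / (9 * PI ^ 4)) with (512 * / (9 * PI^4)) by (field; auto).
    assert (81 <= PI^4) by (replace 81 with (3^4) by ring; apply pow_incr; lra).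
    assert (/ (9 * PI^4) <= / 729) by (apply Rinv_le_contravar; lra).
    lra. }
  set (F := Fd Rr n) in *.
  assert (HFs : C <= F * sqrt Rr).
  { assert (0 <= F * sqrt Rr) by nra.
    assert (C*C <= (F * sqrt Rr) * (F * sqrt Rr)).
    { replace ((F * sqrt Rr) * (F * sqrt Rr)) with (F^2 * (sqrt Rr * sqrt Rr)) by ring. rewrite Hss. lra. }
    nra. }
  replace (r * PI + - delta * (4 * Ss Rr (S n))) with (delta * F) by (rewrite <- FKe, Er; ring).
  apply Rle_ge.
  replace (C * (delta * sqrt delta / (sqrt delta * sqrt Rr))) with (delta * (C / sqrt Rr)) by (field; lra).
  apply Rmult_le_compat_l; [lra|].
  apply Rmult_le_reg_r with (sqrt Rr); auto.
  replace (C / sqrt Rr * sqrt Rr) with C by (field; lra). lra.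
Qed.
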